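(* Let $\lambda$ be a regular uncountable cardinal, $\kappa<\lambda$, and let $\mathcal{C}$ be a coherent sequence of length $\lambda$ and width $<\kappa$. If $\mathcal{C}$ has a weak thread, then $\mathcal{C}$ has a thread.
   Context: For a set of ordinals $A$, $\mathrm{acc}(A)$ is the set of $\beta<\sup\{\alpha+1\mid\alpha\in A\}$ with $\beta=\sup(A\cap\beta)$. A coherent sequence of length $\lambda$ and width $<\eta$ is $\mathcal{C}=\langle\mathcal{C}_\alpha\mid\alpha<\lambda\rangle$ where each $\mathcal{C}_\alpha$ is a nonempty set of fewer than $\eta$ closed unbounded subsets of $\alpha$ (for successor $\alpha=\beta+1$, $\mathcal{C}_\alpha=\{\{\beta\}\}$), such that for all $\beta<\lambda$, $C\in\mathcal{C}_\beta$ and $\alpha\in\mathrm{acc}(C)$, $C\cap\alpha\in\mathcal{C}_\alpha$. A thread through $\mathcal{C}$ is a club $D\subseteq\lambda$ with $D\cap\alpha\in\mathcal{C}_\alpha$ for all $\alpha\in\mathrm{acc}(D)$. A weak thread through $\mathcal{C}$ is a club $E\subseteq\lambda$ such that for every $\alpha\in\mathrm{acc}(E)$ there is $C\in\mathcal{C}_\alpha$ with $E\cap\alpha\subseteq C$. *)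

(* Defs.v *)
(* lambda is modelled as a type L with a strict well-order lt
   (L = the set of ordinals below lambda, up to order isomorphism). *)
From Stdlib Require Import Classical.

Section Defs.
Variables (L : Type) (lt : L -> L -> Prop).

Definition le (a b : L) : Prop := lt a b \/ a = b.

Definition injective {A B : Type} (f : A -> B) : Prop :=
  forall x y, f x = f y -> x = y.

Definition card_lt (A B : Type) : Prop :=
  (exists f : A -> B, injective f) /\ ~ (exists g : B -> A, injective g).

Definition strict_wellorder : Prop :=
  (forall a, ~ lt a a) /\
  (forall a b c, lt a b -> lt b c -> lt a c) /\
  (forall a b, lt a b \/ a = b \/ lt b a) /\
  well_founded lt.

Definition regular_uncountable_cardinal : Prop :=
  strict_wellorder /\
  (* cardinal: no ordinal alpha < lambda has |alpha| = |lambda| *)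
  (forall a : L, ~ exists f : L -> {b : L | lt b a}, injective f) /\
  (* regular: no map from an ordinal alpha < lambda is cofinal in lambda *)
  (forall (a : L) (f : {b : L | lt b a} -> L), exists c, forall x, lt (f x) c) /\
  ~ (exists f : L -> nat, injective f).

(* acc(A): beta < sup{alpha+1 | alpha in A} and beta = sup(A cap beta) *)
Definition acc (A : L -> Prop) (beta : L) : Prop :=
  (exists a, A a /\ le beta a) /\
  (forall g, lt g beta -> exists a, A a /\ lt g a /\ lt a beta).

Definition restrict (A : L -> Prop) (alpha : L) : L -> Prop :=
  fun x => A x /\ lt x alpha.

Definition closed_within (bound : L -> Prop) (A : L -> Prop) : Prop :=
  forall g, bound g -> acc A g -> (exists a, A a /\ lt a g) -> A g.

Definition club_in (alpha : L) (A : L -> Prop) : Prop :=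
  (forall x, A x -> lt x alpha) /\
  (forall b, lt b alpha -> exists g, A g /\ le b g) /\
  closed_within (fun g => lt g alpha) A.

Definition club (A : L -> Prop) : Prop :=
  (forall b, exists g, A g /\ le b g) /\
  closed_within (fun _ => True) A.

Definition coherent_seq (C : L -> (L -> Prop) -> Prop) (kappa : L) : Prop :=
  (forall alpha, exists X, C alpha X) /\
  (forall alpha X, C alpha X -> club_in alpha X) /\
  (forall alpha beta, lt beta alpha -> (forall g, ~ (lt beta g /\ lt g alpha)) ->
     forall X, C alpha X <-> (forall x, X x <-> x = beta)) /\
  (forall alpha, card_lt {X : L -> Prop | C alpha X} {b : L | lt b kappa}) /\
  (forall beta X, C beta X -> forall alpha, acc X alpha -> C alpha (restrict X alpha)).

Definition thread (C : L -> (L -> Prop) -> Prop) (D : L -> Prop) : Prop :=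
  club D /\ forall alpha, acc D alpha -> C alpha (restrict D alpha).

Definition weak_thread (C : L -> (L -> Prop) -> Prop) (E : L -> Prop) : Prop :=
  club E /\ forall alpha, acc E alpha ->
    exists X, C alpha X /\ forall x, restrict E alpha x -> X x.

End Defs.

(* Main.v *)
Require Import Defs.
From Stdlib Require Import Classical ClassicalEpsilon FunctionalExtensionality PropExtensionality ProofIrrelevance.

Inductive Rank (L : Type) (lt : L -> L -> Prop) : L -> nat -> Prop :=
| rk0 a : (forall g, ~ lt g a) -> Rank L lt a 0
| rkS a g k : lt g a -> (forall h, ~ (lt g h /\ lt h a)) -> Rank L lt g k -> Rank L lt a (S k).

Lemma least_el (L : Type) (lt : L -> L -> Prop) (wf : well_founded lt)
  (Q : L -> Prop) x : Q x -> exists m, Q m /\ forall y, Q y -> ~ lt y m.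
Proof.
  revert x. apply (well_founded_ind wf (fun x => Q x -> exists m, Q m /\ forall y, Q y -> ~ lt y m)).
  intros x IH Qx.
  destruct (classic (exists y, Q y /\ lt y x)) as [[y [Qy yx]]|N].
  - exact (IH y yx Qy).
  - exists x; split; auto. intros y Qy yx; apply N; eauto.
Qed.

Lemma limit_exists (L : Type) (lt : L -> L -> Prop) :
  strict_wellorder L lt -> ~ (exists f : L -> nat, injective f) ->
  exists a, (exists g, lt g a) /\ forall g, lt g a -> exists h, lt g h /\ lt h a.
Proof.
  intros [irr [trans [tri wf]]] unc.
  apply NNPP; intro Hn.
  assert (ex : forall a, exists k, Rank L lt a k).
  { apply (well_founded_ind wf). intros a IH.
    destruct (classic (exists g, lt g a)) as [Hg|Hg].
    - assert (exists g, lt g a /\ ~ exists h, lt g h /\ lt h a) as [g [ga Ng]].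
      { apply NNPP; intro N2. apply Hn. exists a; split; auto.
        intros g ga. apply NNPP; intro N3. apply N2. eauto. }
      destruct (IH g ga) as [k Hk]. exists (S k). apply rkS with g; auto.
      intros h [gh ha]; apply Ng; eauto.
    - exists 0. apply rk0. intros g ga; apply Hg; eauto. }
  assert (inj : forall k a b, Rank L lt a k -> Rank L lt b k -> a = b).
  { induction k; intros a b Ha Hb; inversion Ha as [a1 Ha1 e1 e2|a1 g1 k1 ga1 Hp1 Hr1 e1 e2]; inversion Hb as [b1 Hb1 f1 f2|b1 g2 k2 gb2 Hp2 Hr2 f1 f2]; subst.
    - destruct (tri a b) as [ab|[ab|ba]]; auto.
      + exfalso; eapply Hb1; eauto.
      + exfalso; eapply Ha1; eauto.
    - assert (g1 = g2) by (apply IHk; auto). subst g2.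
      destruct (tri a b) as [ab|[ab|ba]]; auto.
      + exfalso; apply (Hp2 a); auto.
      + exfalso; apply (Hp1 b); auto. }
  apply unc. exists (fun a => proj1_sig (constructive_indefinite_description _ (ex a))).
  intros a b Hab.
  destruct (constructive_indefinite_description _ (ex a)) as [ka Ha].
  destruct (constructive_indefinite_description _ (ex b)) as [kb Hb].
  simpl in Hab. subst. eapply inj; eauto.
Qed.

Lemma no_max (L : Type) (lt : L -> L -> Prop) :
  regular_uncountable_cardinal L lt -> forall b, exists c, lt b c.
Proof.
  intros [[irr [trans [tri wf]]] [card [reg unc]]] b.
  apply NNPP; intro N.
  destruct (reg b (fun _ => b)) as [c Hc].
  destruct (classic (exists y, lt y b)) as [[y yb]|N2].
  - apply N. exists c. exact (Hc (exist _ y yb)).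
  - apply unc. exists (fun _ => 0). intros x y _.
    assert (forall z, z = b).
    { intro z. destruct (tri z b) as [h|[h|h]]; auto.
      exfalso; eauto. exfalso; eauto. }
    rewrite (H x), (H y); auto.
Qed.

Lemma recursion (L : Type) (lt : L -> L -> Prop) :
  regular_uncountable_cardinal L lt ->
  forall (P : L -> Prop) (h : L -> L) (b0 : L),
  (forall b, exists g, P g /\ lt b g) ->
  exists s : L -> L, forall x, P (s x) /\ lt b0 (s x) /\ forall y, lt y x -> lt (h (s y)) (s x).
Proof.
  intros RC. pose proof RC as [[irr [trans [tri wf]]] [card [reg unc]]].
  intros P h b0 Punb.
  assert (step : forall x (r : forall y, lt y x -> L), exists g, P g /\ lt b0 g /\
             forall y (p : lt y x), lt (h (r y p)) g).
  { intros x r.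
    destruct (reg x (fun yy : {y | lt y x} => h (r (proj1_sig yy) (proj2_sig yy)))) as [c Hc].
    destruct (tri c b0) as [cb|[cb|cb]].
    - destruct (Punb b0) as [g [Pg bg]]. exists g; repeat split; auto.
      intros y p. apply trans with c. exact (Hc (exist _ y p)). apply trans with b0; auto.
    - subst. destruct (Punb b0) as [g [Pg bg]]. exists g; repeat split; auto.
      intros y p. apply trans with b0; auto. exact (Hc (exist _ y p)).
    - destruct (Punb c) as [g [Pg bg]]. exists g; repeat split; eauto.
      intros y p. apply trans with c; [exact (Hc (exist _ y p))|auto]. }
  pose (F := fun x r => proj1_sig (constructive_indefinite_description _ (step x r))).
  assert (HF : forall x r, P (F x r) /\ lt b0 (F x r) /\ forall y p, lt (h (r y p)) (F x r)).
  { intros x r. unfold F. apply (proj2_sig (constructive_indefinite_description _ (step x r))). }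
  exists (Fix wf (fun _ => L) F).
  intro x. rewrite Fix_eq.
  - destruct (HF x (fun y _ => Fix wf (fun _ => L) F y)) as [H1 [H2 H3]].
    repeat split; auto.
  - intros x0 f g Hfg.
    assert (f = g) by (apply functional_extensionality_dep; intro y;
                       apply functional_extensionality_dep; intro p; auto).
    subst; reflexivity.
Qed.

Definition TT (L : Type) (lt : L -> L -> Prop) C E a (X : L -> Prop) : Prop :=
  C a X /\ forall x, restrict L lt E a x -> X x.
Definition GG (L : Type) (lt : L -> L -> Prop) C E a (X : L -> Prop) : Prop :=
  TT L lt C E a X /\ forall b, acc L lt E b -> lt a b ->
    exists Y, TT L lt C E b Y /\ restrict L lt Y a = X.

Theorem lemma2p3 (L : Type) (lt : L -> L -> Prop) (kappa : L)
  (C : L -> (L -> Prop) -> Prop) :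
  @regular_uncountable_cardinal L lt ->
  @coherent_seq L lt C kappa ->
  (exists E, @weak_thread L lt C E) ->
  exists D, @thread L lt C D.
Proof.
  intros RC CS [E WT].
  pose proof RC as RC'. destruct RC' as [[irr [trans [tri wf]]] [card [reg unc]]].
  destruct CS as [ne [clubs [succ [width coh]]]].
  destruct WT as [[Eunb Eclo] Ewt].
  assert (ext : forall X Y : L -> Prop, (forall x, X x <-> Y x) -> X = Y).
  { intros X Y H. apply functional_extensionality; intro x. apply propositional_extensionality; auto. }
  assert (rr : forall X a b, lt a b -> restrict L lt (restrict L lt X b) a = restrict L lt X a).
  { intros X a b ab. apply ext. intro x. unfold restrict. split; [tauto|].
    intros [Xx xa]. eauto. }
  assert (Eunb' : forall b, exists g, E g /\ lt b g).
  { intro b. destruct (no_max L lt RC b) as [c bc]. destruct (Eunb c) as [g [Eg [cg|cg]]].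
    - exists g; eauto.
    - subst; eauto. }
  assert (Aunb : forall b, exists g, acc L lt E g /\ lt b g).
  { intro b. destruct (limit_exists L lt (conj irr (conj trans (conj tri wf))) unc)
      as [a0 [[g0 g0a0] Ha0]].
    destruct (recursion L lt RC E (fun x => x) b Eunb') as [s Hs].
    destruct (reg a0 (fun yy => s (proj1_sig yy))) as [c Hc].
    destruct (least_el L lt wf (fun c => forall y, lt y a0 -> lt (s y) c) c) as [sg [Hsg Hmin]].
    { intros y ya. exact (Hc (exist _ y ya)). }
    exists sg. split.
    - split.
      + destruct (Eunb sg) as [e [Ee le]]. exists e; split; auto.
      + intros g gs.
        assert (exists y, lt y a0 /\ ~ lt (s y) g) as [y [ya ny]].
        { apply NNPP; intro N. apply (Hmin g); auto. intros y ya.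
          apply NNPP; intro N2; apply N; eauto. }
        destruct (Ha0 y ya) as [y' [yy' y'a]].
        destruct (Hs y') as [Es [_ Hinc]].
        exists (s y'). split; auto. split; auto.
        specialize (Hinc y yy'). destruct (tri (s y) g) as [h|[h|h]].
        * contradiction.
        * subst; auto.
        * eauto.
    - destruct (Hs g0) as [_ [bs _]]. eauto. }
  assert (Aunb2 : forall x y, exists g, acc L lt E g /\ lt x g /\ lt y g).
  { intros x y. destruct (tri x y) as [h|[h|h]].
    - destruct (Aunb y) as [g [Ag yg]]. exists g; eauto.
    - subst. destruct (Aunb y) as [g [Ag yg]]. exists g; eauto.
    - destruct (Aunb x) as [g [Ag yg]]. exists g; eauto. }
  assert (acc_tr : forall (X Y : L -> Prop) g b, (forall x, X x -> lt x b -> Y x) ->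
            acc L lt X g -> lt g b -> (exists h, Y h /\ le L lt g h) -> acc L lt Y g).
  { intros X Y g b HXY [_ Hacc] gb Hex. split; auto.
    intros h hg. destruct (Hacc h hg) as [a' [Xa [ha ag]]]. exists a'; split; eauto. }
  assert (Tres : forall a b X, acc L lt E a -> lt a b -> TT L lt C E b X ->
            TT L lt C E a (restrict L lt X a)).
  { intros a b X Aa ab [CX HX]. destruct (clubs b X CX) as [Xb [Xunb Xclo]]. split.
    - apply (coh b X CX a). apply acc_tr with E b; auto.
      intros x Ex xb. apply HX. split; auto.
    - intros x [Ex xa]. split; auto. apply HX. split; eauto. }
  assert (Tne : forall a, acc L lt E a -> exists X, TT L lt C E a X).
  { intros a Aa. exact (Ewt a Aa). }
  assert (Bound : forall a (Q : (L -> Prop) -> Prop) (P : (L -> Prop) -> L -> Prop),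
            (forall X, C a X -> Q X -> exists g, P X g) ->
            exists c, forall X, C a X -> Q X -> exists g, P X g /\ lt g c).
  { intros a Q P HP. destruct (width a) as [[inj injI] _].
    assert (Hb : forall b : {b | lt b kappa}, exists g, forall X (H : C a X), Q X ->
               inj (exist (fun X => C a X) X H) = b -> P X g).
    { intro b. destruct (classic (exists X (H : C a X), Q X /\ inj (exist (fun X => C a X) X H) = b))
        as [[X0 [H0 [Q0 E0]]]|N].
      - destruct (HP X0 H0 Q0) as [g Pg]. exists g. intros X H QX EX.
        assert (Heq : exist (fun X => C a X) X H = exist (fun X => C a X) X0 H0)
          by (apply injI; congruence).
        apply (f_equal (@proj1_sig _ _)) in Heq. simpl in Heq. subst; auto.
      - exists kappa. intros X H QX EX. exfalso; apply N; eauto. }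
    destruct (reg kappa (fun b => proj1_sig (constructive_indefinite_description _ (Hb b)))) as [c Hc].
    exists c. intros X H QX. exists (proj1_sig (constructive_indefinite_description _
                                    (Hb (inj (exist (fun X => C a X) X H))))).
    split; [|apply Hc].
    exact (proj2_sig (constructive_indefinite_description _ (Hb (inj (exist (fun X => C a X) X H)))) X H QX eq_refl). }
  assert (PH : forall a (S : (L -> Prop) -> Prop), acc L lt E a ->
            (forall Y, S Y -> TT L lt C E a Y) ->
            (forall b, acc L lt E b -> lt a b -> exists Y, TT L lt C E b Y /\ S (restrict L lt Y a)) ->
            exists X, S X /\ forall b, acc L lt E b -> lt a b ->
              exists Y, TT L lt C E b Y /\ restrict L lt Y a = X).
  { intros a S Aa HS Hext. apply NNPP; intro Hn.
    assert (Hbad : forall X, C a X -> S X -> exists b, acc L lt E b /\ lt a b /\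
                      forall Y, TT L lt C E b Y -> restrict L lt Y a <> X).
    { intros X _ SX. apply NNPP; intro N1. apply Hn. exists X; split; auto.
      intros b Ab ab. apply NNPP; intro N2. apply N1. exists b; split; [auto|split; [auto|]].
      intros Y TY eq. apply N2. eauto. }
    destruct (Bound a S _ Hbad) as [c Hc].
    destruct (Aunb2 c a) as [b [Ab [cb ab]]].
    destruct (Hext b Ab ab) as [Y [TY SY]].
    destruct (Hc (restrict L lt Y a) (proj1 (HS _ SY)) SY) as [g [[Ag [ag Hg]] gc]].
    apply (Hg (restrict L lt Y g)).
    - apply Tres with b; eauto.
    - apply rr; auto. }
  assert (G1 : forall a, acc L lt E a -> exists X, GG L lt C E a X).
  { intros a Aa. destruct (PH a (TT L lt C E a) Aa) as [X [TX HX]]; auto.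
    - intros b Ab ab. destruct (Tne b Ab) as [Y TY]. exists Y; split; auto. apply Tres with b; auto.
    - exists X; split; auto. }
  assert (Gres : forall a b Y, acc L lt E a -> lt a b -> GG L lt C E b Y ->
             GG L lt C E a (restrict L lt Y a)).
  { intros a b Y Aa ab [TY HY]. split.
    - apply Tres with b; auto.
    - intros g Ag ag. destruct (tri g b) as [h|[h|h]].
      + exists (restrict L lt Y g). split.
        * apply Tres with b; auto.
        * apply rr; auto.
      + subst; eauto.
      + destruct (HY g Ag h) as [Y' [TY' eq]]. exists Y'; split; auto.
        rewrite <- eq. symmetry. apply rr; auto. }
  assert (G2 : forall a b X, acc L lt E b -> lt a b -> GG L lt C E a X ->
             exists Y, GG L lt C E b Y /\ restrict L lt Y a = X).
  { intros a b X Ab ab [TX HX].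
    destruct (PH b (fun Y => TT L lt C E b Y /\ restrict L lt Y a = X) Ab) as [Y [[TY eY] HY]].
    - intros Y [TY _]; auto.
    - intros g Ag bg. destruct (HX g Ag (trans _ _ _ ab bg)) as [Y' [TY' eY']].
      exists Y'; split; auto. split.
      + apply Tres with g; auto.
      + rewrite rr; auto.
    - exists Y; split; auto. split; auto. }
  apply NNPP; intro NT.
  assert (Split : forall a X, acc L lt E a -> GG L lt C E a X ->
            exists b Y1 Y2, acc L lt E b /\ lt a b /\ GG L lt C E b Y1 /\ GG L lt C E b Y2 /\
              Y1 <> Y2 /\ restrict L lt Y1 a = X /\ restrict L lt Y2 a = X).
  { intros a X Aa GX. apply NNPP; intro Hn.
    assert (uniq : forall b Y1 Y2, acc L lt E b -> lt a b -> GG L lt C E b Y1 -> GG L lt C E b Y2 ->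
              restrict L lt Y1 a = X -> restrict L lt Y2 a = X -> Y1 = Y2).
    { intros b Y1 Y2 Ab ab G1' G2' e1 e2. apply NNPP; intro N. apply Hn.
      exists b, Y1, Y2. exact (conj Ab (conj ab (conj G1' (conj G2' (conj N (conj e1 e2)))))). }
    pose (D := fun x => exists b Y, acc L lt E b /\ lt a b /\ GG L lt C E b Y /\
                         restrict L lt Y a = X /\ Y x).
    assert (DY : forall b Y, acc L lt E b -> lt a b -> GG L lt C E b Y -> restrict L lt Y a = X ->
               forall x, (D x /\ lt x b) <-> Y x).
    { intros b Y Ab ab GY eY x. split.
      - intros [[b' [Y' [Ab' [ab' [GY' [eY' Yx]]]]]] xb].
        destruct (tri b' b) as [h|[h|h]].
        + assert (Y' = restrict L lt Y b').
          { apply uniq with b'; auto. apply Gres with b; auto. rewrite rr; auto. }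
          subst Y'. destruct Yx; auto.
        + subst b'. assert (Y' = Y) by (apply uniq with b; auto). subst; auto.
        + assert (Y = restrict L lt Y' b).
          { apply uniq with b; auto. apply Gres with b'; auto. rewrite rr; auto. }
          subst Y. split; auto.
      - intro Yx. split.
        + exists b, Y. exact (conj Ab (conj ab (conj GY (conj eY Yx)))).
        + destruct GY as [[CY _] _]. destruct (clubs b Y CY) as [HY _]. auto. }
    apply NT. exists D. split; [split|].
    - intro b0. destruct (Eunb b0) as [e [Ee b0e]].
      destruct (Aunb2 e a) as [b [Ab [eb ab]]].
      destruct (G2 a b X Ab ab GX) as [Y [GY eY]].
      exists e; split; auto. apply (DY b Y Ab ab GY eY). destruct GY as [[_ HY] _].
      apply HY. split; auto.
    - intros g _ accD [a' [Da' a'g]].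
      destruct (Aunb2 g a) as [b [Ab [gb ab]]].
      destruct (G2 a b X Ab ab GX) as [Y [GY eY]].
      assert (Y g).
      { destruct GY as [[CY HYT] HYG] eqn:EGY. destruct (clubs b Y CY) as [Yb [Yunb Yclo]].
        apply Yclo; auto.
        - apply acc_tr with D b; auto.
          intros x Dx xb. apply (DY b Y Ab ab GY eY); auto.
        - exists a'. split; auto. apply (DY b Y Ab ab GY eY). split; eauto. }
      apply (DY b Y Ab ab GY eY); auto.
    - intros g accD. destruct accD as [[a' [Da' ga']] Hacc].
      destruct (Aunb2 a' a) as [b [Ab [a'b ab]]].
      destruct (G2 a b X Ab ab GX) as [Y [GY eY]].
      assert (gb : lt g b) by (destruct ga' as [h|h]; [eauto|subst; auto]).
      assert (CY : C b Y) by (destruct GY as [[CY _] _]; auto).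
      assert (AY : acc L lt Y g).
      { apply acc_tr with D b; auto.
        - intros x Dx xb. apply (DY b Y Ab ab GY eY); auto.
        - split; auto. exists a'; split; auto.
        - exists a'. split; auto. apply (DY b Y Ab ab GY eY). split; auto. }
      replace (restrict L lt D g) with (restrict L lt Y g).
      + apply coh with b; auto.
      + apply ext. intro x. unfold restrict. rewrite <- (DY b Y Ab ab GY eY x).
        split; [tauto|]. intros [Dx xg]. split; eauto. }
  assert (Phi : forall a, exists b, acc L lt E a -> acc L lt E b /\ lt a b /\
            forall X, GG L lt C E a X -> exists Y1 Y2, GG L lt C E b Y1 /\ GG L lt C E b Y2 /\
              Y1 <> Y2 /\ restrict L lt Y1 a = X /\ restrict L lt Y2 a = X).
  { intro a. destruct (classic (acc L lt E a)) as [Aa|NA]; [|exists kappa; tauto].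
    destruct (Bound a (GG L lt C E a)
      (fun X g => acc L lt E g /\ lt a g /\ exists Y1 Y2, GG L lt C E g Y1 /\ GG L lt C E g Y2 /\
              Y1 <> Y2 /\ restrict L lt Y1 a = X /\ restrict L lt Y2 a = X)) as [c Hc].
    { intros X _ GX. destruct (Split a X Aa GX) as [b [Y1 [Y2 H]]]. exists b. 
      destruct H as [Ab [ab H]]. split; auto. split; auto. eauto. }
    destruct (Aunb2 c a) as [b [Ab [cb ab]]].
    exists b. intros Aa0. split; auto. split; auto.
    intros X GX.
    destruct (Hc X (proj1 (proj1 GX)) GX) as [g [[Ag [ag [Y1 [Y2 [GY1 [GY2 [ne12 [e1 e2]]]]]]]] gc]].
    assert (gb : lt g b) by eauto.
    destruct (G2 g b Y1 Ab gb GY1) as [Z1 [GZ1 f1]].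
    destruct (G2 g b Y2 Ab gb GY2) as [Z2 [GZ2 f2]].
    exists Z1, Z2. split; auto. split; auto. split.
    - intro eZ. subst Z2. apply ne12. congruence.
    - split.
      + rewrite <- (rr Z1 a g ag). congruence.
      + rewrite <- (rr Z2 a g ag). congruence. }
  pose (phi := fun a => proj1_sig (constructive_indefinite_description _ (Phi a))).
  assert (Hphi : forall a, acc L lt E a -> acc L lt E (phi a) /\ lt a (phi a) /\
            forall X, GG L lt C E a X -> exists Y1 Y2, GG L lt C E (phi a) Y1 /\ GG L lt C E (phi a) Y2 /\
              Y1 <> Y2 /\ restrict L lt Y1 a = X /\ restrict L lt Y2 a = X).
  { intro a. unfold phi. apply (proj2_sig (constructive_indefinite_description _ (Phi a))). }
  destruct (recursion L lt RC (acc L lt E) phi kappa Aunb) as [s Hs].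
  pose (delta := s kappa).
  assert (Ad : acc L lt E delta) by (apply (Hs kappa)).
  destruct (G1 delta Ad) as [z Gz].
  assert (HW : forall xi : {b | lt b kappa}, exists W, C delta W /\
             restrict L lt W (s (proj1_sig xi)) = restrict L lt z (s (proj1_sig xi)) /\
             restrict L lt W (phi (s (proj1_sig xi))) <> restrict L lt z (phi (s (proj1_sig xi)))).
  { intros [xi xik]. simpl. set (a := s xi).
    assert (Aa : acc L lt E a) by (apply (Hs xi)).
    destruct (Hphi a Aa) as [Apa [apa Hsp]].
    assert (pad : lt (phi a) delta) by (apply (Hs kappa); auto).
    assert (ad : lt a delta) by eauto.
    destruct (Hsp (restrict L lt z a) (Gres a delta z Aa ad Gz)) as [Y1 [Y2 [GY1 [GY2 [ne12 [e1 e2]]]]]].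
    assert (exists y, GG L lt C E (phi a) y /\ restrict L lt y a = restrict L lt z a /\
                      y <> restrict L lt z (phi a)) as [y [Gy [ey ny]]].
    { destruct (classic (Y1 = restrict L lt z (phi a))) as [h|h].
      - exists Y2. split; auto. split; auto. intro h2. apply ne12. congruence.
      - exists Y1. auto. }
    destruct (G2 (phi a) delta y Ad pad Gy) as [W [GW eW]].
    exists W. split; [destruct GW as [[CW _] _]; auto|]. split.
    - rewrite <- (rr W a (phi a) apa). congruence.
    - congruence. }
  destruct (width delta) as [_ Nw]. apply Nw.
  exists (fun xi => exist (fun X => C delta X)
                      (proj1_sig (constructive_indefinite_description _ (HW xi)))
                      (proj1 (proj2_sig (constructive_indefinite_description _ (HW xi))))).
  intros xi zeta Heq.
  apply (f_equal (@proj1_sig _ _)) in Heq. simpl in Heq.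
  destruct (constructive_indefinite_description _ (HW xi)) as [W1 [c1 [a1 b1]]].
  destruct (constructive_indefinite_description _ (HW zeta)) as [W2 [c2 [a2 b2]]].
  simpl in Heq. subst W2.
  destruct xi as [x px], zeta as [y py]. simpl in *.
  destruct (tri x y) as [h|[h|h]].
  - exfalso. apply b1.
    assert (lt (phi (s x)) (s y)) by (apply (Hs y); auto).
    rewrite <- (rr W1 _ _ H), a2, rr; auto.
  - subst y. f_equal. apply proof_irrelevance.
  - exfalso. apply b2.
    assert (lt (phi (s y)) (s x)) by (apply (Hs x); auto).
    rewrite <- (rr W1 _ _ H), a1, rr; auto.
Qed.
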